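(* Let $K\subset\mathbb{R}^{2n}$ be a centrally symmetric convex body ($K=-K$) satisfying $K=iK$, and let $r>0$ be the largest number such that $rB^{2n}\subset K$. Then $c^Z_{lin}(K)\le 2\pi r^2$.
   Context: A convex body is a bounded convex set with non-empty interior. $\mathbb{R}^{2n}$ with coordinates $(x_1,y_1,\dots,x_n,y_n)$ is identified with $\mathbb{C}^n$, and multiplication by $i$ is the linear map $i(x_1,y_1,\dots,x_n,y_n)=(-y_1,x_1,\dots,-y_n,x_n)$. $B^{2n}$ is the open Euclidean unit ball. The standard symplectic form is $\omega_{st}=\sum_j dx_j\wedge dy_j$ and $\mathrm{Sp}(\mathbb{R}^{2n})$ is the group of linear maps preserving it. $Z^{2n}(r)=\{(x_1,y_1,\dots,x_n,y_n): x_1^2+y_1^2<r^2\}$. The linearized cylindrical capacity is $c^Z_{lin}(U)=\inf\{\pi\rho^2 : \exists\,\psi\in\mathrm{Sp}(\mathbb{R}^{2n}) \text{ with } \psi(U)\subset Z^{2n}(\rho)\}$. *)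

(* Defs.v *)
From HB Require Import structures.
From mathcomp Require Import all_boot all_order all_algebra.
From mathcomp Require Import all_classical all_reals all_analysis.
Set Implicit Arguments. Unset Strict Implicit. Unset Printing Implicit Defensive.
Import Order.TTheory GRing.Theory Num.Theory.
Local Open Scope classical_set_scope.
Local Open Scope ring_scope.

(* R^{2n} is 'rV[R]_(2*n), coordinates ordered (x_1,y_1,...,x_n,y_n):
   x_j (j = 1..n) is index 2(j-1), y_j is index 2(j-1)+1. *)

Definition co (R : pzRingType) (m : nat) (v : 'rV[R]_m) (k : nat) : R :=
  match @insub nat (fun i => i < m)%N 'I_m k with Some i => v 0 i | None => 0 end.

(* multiplication by i: i(x_1,y_1,...) = (-y_1,x_1,...) *)
Definition mulI (R : pzRingType) (n : nat) (v : 'rV[R]_(2 * n)) : 'rV[R]_(2 * n) :=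
  \row_(k < 2 * n) (if odd k then co v k.-1 else - co v k.+1).

Definition norm2 (R : pzRingType) (m : nat) (v : 'rV[R]_m) : R :=
  \sum_(k < m) v 0 k ^+ 2.

Definition omega (R : pzRingType) (n : nat) (u v : 'rV[R]_(2 * n)) : R :=
  \sum_(j < n) (co u (2 * j) * co v (2 * j).+1 - co u (2 * j).+1 * co v (2 * j)).

Definition symplectic (R : pzRingType) (n : nat) (A : 'M[R]_(2 * n)) : Prop :=
  forall u v : 'rV[R]_(2 * n), omega (u *m A) (v *m A) = omega u v.

Definition eball (R : numDomainType) (m : nat) (x : 'rV[R]_m) (r : R) : set 'rV[R]_m :=
  [set v | norm2 (v - x) < r ^+ 2].

Definition convex_body (R : numDomainType) (m : nat) (K : set 'rV[R]_m) : Prop :=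
  [/\
      (forall u v t, K u -> K v -> 0 <= t -> t <= 1 -> K ((1 - t) *: u + t *: v)),
      (exists M : R, forall v, K v -> norm2 v <= M) &
      (exists x (e : R), 0 < e /\ eball x e `<=` K)].

Definition cylinder (R : numDomainType) (n : nat) (rho : R) : set 'rV[R]_(2 * n) :=
  [set v | co v 0 ^+ 2 + co v 1 ^+ 2 < rho ^+ 2].

(* linearized cylindrical capacity, as an extended real (inf of empty set = +oo) *)
Definition c_lin_Z (R : realType) (n : nat) (U : set 'rV[R]_(2 * n)) : \bar R :=
  ereal_inf [set ((pi : R) * rho ^+ 2)%:E | rho in
     [set rho : R | 0 < rho /\ exists A : 'M[R]_(2 * n),
        symplectic A /\ [set u *m A | u in U] `<=` @cylinder R n rho]].

(* Main.v *)
Require Import Defs.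
From HB Require Import structures.
From mathcomp Require Import all_boot all_order all_algebra.
From mathcomp Require Import all_classical all_reals all_analysis.
From mathcomp Require Import ring lra zify.
Set Implicit Arguments. Unset Strict Implicit. Unset Printing Implicit Defensive.
Import Order.TTheory GRing.Theory Num.Theory.
Local Open Scope classical_set_scope.
Local Open Scope ring_scope.
Lemma coE (R : realType) (m : nat) (v : 'rV[R]_m) (i : 'I_m) : co v i = v 0 i.
Proof. rewrite /co; case: insubP => [j _ /val_inj -> //|]; by rewrite ltn_ord. Qed.

Lemma co_out (R : realType) (m : nat) (v : 'rV[R]_m) k : (m <= k)%N -> co v k = 0.
Proof. move=> h; rewrite /co; case: insubP => [j hj _|//]; by move: hj; rewrite ltnNge h. Qed.

Lemma coD (R : realType) (m : nat) (v w : 'rV[R]_m) k : co (v + w) k = co v k + co w k.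
Proof. rewrite /co; case: insubP => [j _ _|_]; by rewrite ?mxE ?addr0. Qed.

Lemma coZ (R : realType) (m : nat) (a : R) (w : 'rV[R]_m) k : co (a *: w) k = a * co w k.
Proof. rewrite /co; case: insubP => [j _ _|_]; by rewrite ?mxE ?mulr0. Qed.

Lemma coN (R : realType) (m : nat) (w : 'rV[R]_m) k : co (- w) k = - co w k.
Proof. rewrite /co; case: insubP => [j _ _|_]; by rewrite ?mxE ?oppr0. Qed.

Lemma sum2 (R : realType) (F : nat -> R) n :
  \sum_(k < 2 * n) F k = \sum_(j < n) (F (2 * j)%N + F (2 * j).+1).
Proof.
rewrite -(big_mkord xpredT F) -(big_mkord xpredT (fun j => F (2 * j)%N + F (2 * j).+1)).
elim: n => [|n IH]; first by rewrite !big_geq.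
rewrite [RHS]big_nat_recr //= -IH.
rewrite (_ : (2 * n.+1 = (2 * n).+2)%N); last by rewrite mulnS addnC addn2.
by rewrite !big_nat_recr //= addrA.
Qed.

Definition ip (R : realType) (m : nat) (u w : 'rV[R]_m) : R := (u *m w^T) 0 0.

Lemma ipE (R : realType) (m : nat) (u w : 'rV[R]_m) : ip u w = \sum_(k < m) co u k * co w k.
Proof. rewrite /ip mxE; apply: eq_bigr => k _; by rewrite !coE mxE. Qed.

Lemma norm2E (R : realType) (m : nat) (u : 'rV[R]_m) : norm2 u = ip u u.
Proof. rewrite ipE /norm2; apply: eq_bigr => k _; by rewrite !coE expr2. Qed.

Lemma ipC (R : realType) (m : nat) (u w : 'rV[R]_m) : ip u w = ip w u.
Proof. rewrite !ipE; apply: eq_bigr => k _; by rewrite mulrC. Qed.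

Lemma ipDl (R : realType) (m : nat) (u v w : 'rV[R]_m) : ip (u + v) w = ip u w + ip v w.
Proof. rewrite !ipE -big_split; apply: eq_bigr => k _; by rewrite coD mulrDl. Qed.

Lemma ipZl (R : realType) (m : nat) a (u w : 'rV[R]_m) : ip (a *: u) w = a * ip u w.
Proof. rewrite !ipE mulr_sumr; apply: eq_bigr => k _; by rewrite coZ mulrA. Qed.

Lemma ipNl (R : realType) (m : nat) (u w : 'rV[R]_m) : ip (- u) w = - ip u w.
Proof. by rewrite -scaleN1r ipZl mulN1r. Qed.

Lemma ipDr (R : realType) (m : nat) (u v w : 'rV[R]_m) : ip w (u + v) = ip w u + ip w v.
Proof. by rewrite ipC ipDl ![ip _ w]ipC. Qed.
Lemma ipZr (R : realType) (m : nat) a (u w : 'rV[R]_m) : ip w (a *: u) = a * ip w u.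
Proof. by rewrite ipC ipZl ipC. Qed.
Lemma ipNr (R : realType) (m : nat) (u w : 'rV[R]_m) : ip w (- u) = - ip w u.
Proof. by rewrite ipC ipNl ipC. Qed.
Lemma ipBl (R : realType) (m : nat) (u v w : 'rV[R]_m) : ip (u - v) w = ip u w - ip v w.
Proof. by rewrite ipDl ipNl. Qed.
Lemma ipBr (R : realType) (m : nat) (u v w : 'rV[R]_m) : ip w (u - v) = ip w u - ip w v.
Proof. by rewrite ipDr ipNr. Qed.

Lemma ip_ge0 (R : realType) (m : nat) (u : 'rV[R]_m) : 0 <= ip u u.
Proof. rewrite -norm2E /norm2; apply: sumr_ge0 => k _; exact: sqr_ge0. Qed.

Lemma ip_eq0 (R : realType) (m : nat) (u : 'rV[R]_m) : ip u u = 0 -> u = 0.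
Proof.
rewrite -norm2E /norm2 => /eqP; rewrite psumr_eq0 => [/allP h|k _]; last exact: sqr_ge0.
apply/matrixP => i j; rewrite [i]ord1 mxE; apply/eqP; rewrite -sqrf_eq0.
by apply: (implyP (h j _)); rewrite ?mem_index_enum.
Qed.

Lemma even_lt (j n : nat) : ~~ odd j -> (j < 2 * n)%N -> (j.+1 < 2 * n)%N.
Proof.
move=> he h; rewrite ltn_neqAle h andbT; apply: contraNneq he => e.
by move: (congr1 odd e); rewrite oddM /= => /negbFE.
Qed.

Lemma coI (R : realType) n (v : 'rV[R]_(2 * n)) k : (k < 2 * n)%N ->
  co (mulI v) k = if odd k then co v k.-1 else - co v k.+1.
Proof. move=> hk; rewrite /co; case: insubP => [j _ hj|]; last by rewrite hk.
by rewrite mxE hj. Qed.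

Lemma mulI_I (R : realType) n (v : 'rV[R]_(2 * n)) : mulI (mulI v) = - v.
Proof.
apply/matrixP => i j; rewrite [i]ord1 !mxE.
case: j => [[|j] hj] /=.
  by rewrite coI ?(even_lt _ hj) //= (coE v (Ordinal hj)).
case: ifP => ho.
  by rewrite coI ?(ltn_trans _ hj) //= (negbTE ho) (coE v (Ordinal hj)).
have hj2 : (j.+2 < 2 * n)%N by apply: even_lt => //=; rewrite ho.
rewrite coI //= (negbFE ho) /=.
by rewrite (coE v (Ordinal hj)).
Qed.

Lemma mulID (R : realType) n (v w : 'rV[R]_(2 * n)) : mulI (v + w) = mulI v + mulI w.
Proof. apply/matrixP => i j; rewrite !mxE !coD; case: ifP => _ //; by rewrite opprD. Qed.

Lemma mulIZ (R : realType) n a (v : 'rV[R]_(2 * n)) : mulI (a *: v) = a *: mulI v.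
Proof. apply/matrixP => i j; rewrite !mxE !coZ; case: ifP => _ //; by rewrite mulrN. Qed.

Lemma mulIN (R : realType) n (v : 'rV[R]_(2 * n)) : mulI (- v) = - mulI v.
Proof. by rewrite -scaleN1r mulIZ scaleN1r. Qed.

Lemma ipII (R : realType) n (v w : 'rV[R]_(2 * n)) : ip (mulI v) (mulI w) = ip v w.
Proof.
rewrite !ipE !(sum2 (fun k => co _ k * co _ k)); apply: eq_bigr => [[j hj]] _ /=.
have h1 : ((2 * j) < 2 * n)%N by lia.
have h2 : ((2 * j).+1 < 2 * n)%N by lia.
rewrite !coI // /= !oddM /=; ring.
Qed.

Lemma omegaE (R : realType) n (u v : 'rV[R]_(2 * n)) : omega u v = - ip u (mulI v).
Proof.
rewrite /omega ipE (sum2 (fun k => co _ k * co _ k)) -sumrN; apply: eq_bigr => [[j hj]] _ /=.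
have h1 : ((2 * j) < 2 * n)%N by lia.
have h2 : ((2 * j).+1 < 2 * n)%N by lia.
rewrite !coI // /= !oddM /=; ring.
Qed.

Lemma ipI (R : realType) n (v w : 'rV[R]_(2 * n)) : ip (mulI v) w = - ip v (mulI w).
Proof. by rewrite -{1}ipII mulI_I ipNl. Qed.

Lemma ipI0 (R : realType) n (v : 'rV[R]_(2 * n)) : ip v (mulI v) = 0.
Proof.
have := ipI v v; rewrite ipC; lra.
Qed.

Definition ek (R : realType) m (k : nat) : 'rV[R]_m := \row_(j < m) ((j : nat) == k)%:R.

Lemma co_ek (R : realType) m k l : co (ek R m k) l = ((l == k) && (l < m)%N)%:R.
Proof. rewrite /co; case: insubP => [j -> hj|/negbTE ->]; by rewrite ?mxE ?hj ?andbT ?andbF. Qed.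

Lemma ip_ek (R : realType) m (v : 'rV[R]_m) k : ip v (ek R m k) = co v k.
Proof.
rewrite ipE; case: (ltnP k m) => hk.
  rewrite (bigD1 (Ordinal hk)) //= co_ek eqxx hk mulr1 big1 ?addr0 // => j hj.
  rewrite co_ek ltn_ord andbT; case: eqP => [e|]; last by rewrite mulr0.
  by move: hj; rewrite -(inj_eq val_inj) /= e eqxx.
rewrite co_out // big1 // => j _; rewrite co_ek.
have -> : (j == k :> nat) = false by apply/negbTE; rewrite neq_ltn (leq_trans (ltn_ord j) hk).
by rewrite mulr0.
Qed.

Lemma mulI_e0 (R : realType) n : mulI (ek R (2 * n) 0) = ek R (2 * n) 1.
Proof.
apply/matrixP => i j; rewrite !mxE !co_ek.
case: j => [[|j] hj] /=; first by rewrite oppr0.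
case: j hj => [|j] hj /=; first by rewrite ltnW.
by case: ifP => _; rewrite ?oppr0 ?andFb.
Qed.

Definition Hm (R : realType) n (w : 'rV[R]_(2 * n)) : 'M[R]_(2 * n) :=
  1%:M - (2 / ip w w) *: (w^T *m w + (mulI w)^T *m mulI w).

Lemma outerE (R : realType) m (v w : 'rV[R]_m) : v *m (w^T *m w) = ip v w *: w.
Proof. by rewrite mulmxA [v *m w^T]mx11_scalar mul_scalar_mx. Qed.

Lemma HmE (R : realType) n (w v : 'rV[R]_(2 * n)) :
  v *m Hm w = v - (2 / ip w w) *: (ip v w *: w + ip v (mulI w) *: mulI w).
Proof. by rewrite /Hm mulmxBr mulmx1 -scalemxAr mulmxDr !outerE. Qed.

Lemma Hm_I (R : realType) n (w v : 'rV[R]_(2 * n)) :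
  mulI (v *m Hm w) = mulI v *m Hm w.
Proof.
rewrite !HmE mulID mulIN mulIZ mulID !mulIZ mulI_I ipI ipII.
rewrite scalerN scaleNr; congr (_ - _ *: _); by rewrite addrC.
Qed.

Lemma Hm_orth (R : realType) n (w u v : 'rV[R]_(2 * n)) :
  ip (u *m Hm w) (v *m Hm w) = ip u v.
Proof.
rewrite !HmE.
have h1 := ipI0 w. have h2 : ip (mulI w) w = 0 by rewrite ipC.
have h3 : ip (mulI w) (mulI w) = ip w w by rewrite ipII.
rewrite !(ipBl, ipBr, ipDl, ipDr, ipZl, ipZr, ipNl, ipNr) h1 h2 h3.
set N := ip w w.
rewrite [ip w v]ipC [ip (mulI w) v]ipC.
have [->|hN] := eqVneq N 0.
  rewrite invr0 mulr0; ring.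
field; exact: hN.
Qed.

Lemma Hm_sympl (R : realType) n (w : 'rV[R]_(2 * n)) : symplectic (Hm w).
Proof. move=> u v; by rewrite !omegaE Hm_I Hm_orth. Qed.

Lemma Hm_sym (R : realType) n (w u v : 'rV[R]_(2 * n)) :
  ip (u *m Hm w) v = ip u (v *m Hm w).
Proof.
rewrite !HmE !(ipBl, ipBr, ipDl, ipDr, ipZl, ipZr, ipNl, ipNr).
rewrite [ip w v]ipC [ip (mulI w) v]ipC; ring.
Qed.

Lemma ab_exists (R : realType) (p0 p1 : R) :
  exists a b : R, a ^+ 2 + b ^+ 2 = 1 /\ b * p0 - a * p1 = 0.
Proof.
have [h|h] := eqVneq (p0 ^+ 2 + p1 ^+ 2) 0.
  have h0 : p0 = 0 by apply/eqP; rewrite -sqrf_eq0; apply/eqP; nra.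
  have h1 : p1 = 0 by apply/eqP; rewrite -sqrf_eq0; apply/eqP; nra.
  exists 1, 0; rewrite h0 h1; split; ring.
set rho := Num.sqrt (p0 ^+ 2 + p1 ^+ 2).
have hr2 : rho ^+ 2 = p0 ^+ 2 + p1 ^+ 2 by rewrite sqr_sqrtr // addr_ge0 // sqr_ge0.
have hr : rho != 0 by apply: contra h => /eqP e; rewrite -hr2 e expr0n.
exists (p0 / rho), (p1 / rho); split; last by field.
by rewrite !expr_div_n -mulrDl -hr2 divff // expf_neq0.
Qed.

Lemma unit_sympl (R : realType) n (u : 'rV[R]_(2 * n)) : (0 < n)%N -> ip u u = 1 ->
  exists A, symplectic A /\ forall v, co (v *m A) 0 ^+ 2 + co (v *m A) 1 ^+ 2 =
     ip v u ^+ 2 + ip v (mulI u) ^+ 2.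
Proof.
move=> hn hu.
have h0 : (0 < 2 * n)%N by lia.
have h1 : (1 < 2 * n)%N by lia.
have [a [b [hab hab2]]] := ab_exists (co u 0) (co u 1).
pose e0 := ek R (2 * n) 0. pose e1 := ek R (2 * n) 1.
have ie0 : mulI e0 = e1 by exact: mulI_e0.
have ie1 : mulI e1 = - e0 by rewrite -ie0 mulI_I.
pose e' := a *: e0 + b *: e1.
pose w := u - e'.
exists (Hm w); split; first exact: Hm_sympl.
have i00 : ip e0 e0 = 1 by rewrite ip_ek co_ek h0.
have i01 : ip e0 e1 = 0 by rewrite ip_ek co_ek.
have i11 : ip e1 e1 = 1 by rewrite ip_ek co_ek h1.
have ie'e' : ip e' e' = 1.
  rewrite /e' !(ipDl, ipDr, ipZl, ipZr) i00 i11 [ip e1 e0]ipC i01 -hab; nra.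
have ie'iu : ip e' (mulI u) = 0.
  rewrite /e' !(ipDl, ipZl) ![ip _ (mulI u)]ipC /e0 /e1 !ip_ek !coI //= -hab2; ring.
have ie'ie' : ip e' (mulI e') = 0 by exact: ipI0.
have He' : e' *m Hm w = u.
  rewrite HmE.
  have -> : ip e' (mulI w) = 0 by rewrite /w mulID mulIN ipDr ipNr ie'iu ie'ie' subrr.
  have hw : ip e' w = ip e' u - 1 by rewrite /w ipBr ie'e'.
  have hN : ip w w = 2 - 2 * ip e' u.
    by rewrite /w !(ipBl, ipBr) hu ie'e' [ip u e']ipC; ring.
  have [hz|hnz] := eqVneq (ip w w) 0.
    have : w = 0 by exact: ip_eq0.
    by rewrite hz invr0 mulr0 scale0r subr0 /w => /eqP; rewrite subr_eq0 => /eqP ->.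
  rewrite hw scale0r addr0 scalerA.
  have -> : 2 / ip w w * (ip e' u - 1) = -1.
    move: hnz; rewrite hN => hnz; field.
    by apply: contra hnz => /eqP hh; apply/eqP; lra.
  by rewrite scaleN1r opprK /w addrC subrK.
have he0 : e0 = a *: e' - b *: mulI e'.
  rewrite /e' mulID !mulIZ ie0 ie1.
  apply/matrixP => i j; rewrite !mxE -[LHS]mul1r -hab; ring.
have He0 : e0 *m Hm w = a *: u - b *: mulI u.
  by rewrite he0 mulmxBl -!scalemxAl -Hm_I He'.
have He1 : e1 *m Hm w = a *: mulI u + b *: u.
  by rewrite -ie0 -Hm_I He0 mulID mulIN !mulIZ mulI_I scalerN opprK.
move=> v.
rewrite -(ip_ek (v *m Hm w) 0) -(ip_ek (v *m Hm w) 1) -/e0 -/e1 !Hm_sym He0 He1.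
rewrite !(ipBr, ipDr, ipZr).
rewrite -[RHS]mul1r -hab; ring.
Qed.

Lemma norm2Z (R : realType) m (c : R) (v : 'rV[R]_m) : norm2 (c *: v) = c ^+ 2 * norm2 v.
Proof. by rewrite !norm2E ipZl ipZr mulrA expr2. Qed.

Lemma half_bound (R : realType) m (K : set 'rV[R]_m) (r eps : R) :
  convex_body K -> eball 0 r `<=` K -> (forall s : R, r < s -> ~ (eball 0 s `<=` K)) ->
  0 < r -> 0 < eps -> eps < r ->
  exists u, ip u u = 1 /\ forall x, K x -> ip x u <= r + eps.
Proof.
move=> [hconv [M hM] _] hball hmax hr he her.
have K0 : K 0.
  apply: (hball); rewrite /eball /= subrr /norm2 big1 => [|k _]; first exact: exprn_gt0.
  by rewrite mxE expr0n.
have M0 : 0 <= M by apply: (le_trans _ (hM 0 K0)); rewrite norm2E ip_ge0.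
pose M' := M + r ^+ 2 + 1.
have hM' : 0 < M' by rewrite /M'; nra.
pose s := Num.sqrt (r ^+ 2 + r ^+ 2 * eps ^+ 2 / M').
have hs2 : s ^+ 2 = r ^+ 2 + r ^+ 2 * eps ^+ 2 / M'.
  rewrite sqr_sqrtr // addr_ge0 ?sqr_ge0 // divr_ge0 ?mulr_ge0 ?sqr_ge0 //; exact: ltW.
have hrs : r < s.
  have h1 : 0 < r ^+ 2 * eps ^+ 2 / M' by rewrite divr_gt0 // mulr_gt0 // exprn_gt0.
  rewrite -[r]gtr0_norm // -sqrtr_sqr ltr_sqrt ?ltrDl //.
  by apply: (lt_le_trans (exprn_gt0 2 hr)); rewrite lerDl ltW.
have : exists q, eball 0 s q /\ ~ K q.
  apply: contra_notP (hmax s hrs) => hn q hq.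
  by apply: contrapT => hK; apply: hn; exists q.
move=> [q [hqs hqK]].
move: hqs; rewrite /eball /= subr0 norm2E => hqs.
have hqr : r ^+ 2 <= ip q q.
  rewrite leNgt; apply/negP => hlt; apply: (hqK); apply: (hball).
  by rewrite /eball /= subr0 norm2E.
pose N := Num.sqrt (ip q q).
have hN2 : N ^+ 2 = ip q q by rewrite sqr_sqrtr // ip_ge0.
have hN0 : 0 <= N by exact: sqrtr_ge0.
have hNr : r <= N by rewrite -(ler_pXn2r (n := 2)) // ?nnegrE ?hN2 // ltW.
have hNpos : 0 < N by exact: lt_le_trans hNr.
exists (N^-1 *: q); split.
  rewrite ipZl ipZr -hN2; field; exact: lt0r_neq0.
move=> x hx; rewrite leNgt; apply/negP => ha.
set a := ip x (N^-1 *: q) in ha.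
have hxq : ip q x = N * a by rewrite /a ipZr ipC mulrA divff ?mul1r // lt0r_neq0.
pose t := r * eps / M'.
have ht0 : 0 < t by rewrite divr_gt0 // mulr_gt0.
have htM : t * M' = r * eps by rewrite /t mulrVK ?unitfE ?lt0r_neq0.
have ht1 : t < 1.
  rewrite -(ltr_pM2r hM') mul1r htM /M'; nra.
have h1t : 1 - t != 0 by rewrite subr_eq0 eq_sym lt_eqF.
pose y := (1 - t)^-1 *: (q - t *: x).
have hq : (1 - t) *: y + t *: x = q by rewrite /y scalerA divff // scale1r subrK.
have hxx : ip x x <= M' by rewrite -norm2E /M' (le_trans (hM x hx)) // -addrA lerDl; nra.
have key : ip (q - t *: x) (q - t *: x) < r ^+ 2 * (1 - t) ^+ 2.
  rewrite !(ipBl, ipBr, ipZl, ipZr) [ip x q]ipC hxq.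
  have e1a : t * t * ip x x <= t * t * M' by rewrite ler_pM2l; [exact: hxx | exact: mulr_gt0].
  have e1 : t * t * ip x x <= t * r * eps.
    by apply: (le_trans e1a); rewrite -mulrA htM mulrA.
  have e2 : r * (r + eps) <= N * a by nra.
  have e3 : t * r * eps * M' = r ^+ 2 * eps ^+ 2.
    have -> : t * r * eps * M' = (t * M') * (r * eps) by ring.
    rewrite htM; ring.
  have e4 : ip q q < r ^+ 2 + t * r * eps.
    have : r ^+ 2 * eps ^+ 2 / M' = t * r * eps by rewrite -e3 mulfK ?lt0r_neq0.
    by move=> <-; rewrite -hs2 -hN2 hN2.
  nra.
apply: (hqK); rewrite -hq; apply: hconv => //; [|exact: ltW|exact: ltW].
apply: (hball); rewrite /eball /= subr0 /y norm2Z norm2E.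
have hp : 0 < (1 - t) ^+ 2 by rewrite exprn_gt0 // subr_gt0.
by rewrite exprVn mulrC ltr_pdivrMr.
Qed.

Lemma bound_eps (R : realType) (n : nat) (K : set 'rV[R]_(2 * n)) (r eps : R) :
  (0 < n)%N -> convex_body K -> K = [set - v | v in K] -> K = [set mulI v | v in K] ->
  0 < r -> eball 0 r `<=` K -> (forall s : R, r < s -> ~ (eball 0 s `<=` K)) ->
  0 < eps -> eps < r ->
  (c_lin_Z K <= (2 * pi * (r + 2 * eps) ^+ 2)%:E)%E.
Proof.
move=> hn hcb hsym hI hr hball hmax he her.
have [u [hu hub]] := half_bound hcb hball hmax hr he her.
have hneg : forall x, K x -> K (- x).
  by move=> x; rewrite {1}hsym => -[v hv <-]; rewrite opprK.
have hX : forall x, K x -> ip x u ^+ 2 <= (r + eps) ^+ 2.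
  move=> x hx; have h1 := hub x hx; have := hub _ (hneg x hx); rewrite ipNl => h2.
  nra.
have hY : forall x, K x -> ip x (mulI u) ^+ 2 <= (r + eps) ^+ 2.
  move=> x; rewrite {1}hI => -[v hv <-]; rewrite ipII; exact: hX.
have [A [hA hAv]] := unit_sympl hn hu.
pose rho := (r + 2 * eps) * Num.sqrt 2.
have hrho2 : rho ^+ 2 = 2 * (r + 2 * eps) ^+ 2.
  by rewrite exprMn sqr_sqrtr // mulrC.
have hrho : 0 < rho by rewrite mulr_gt0 // ?sqrtr_gt0 //; lra.
apply: ereal_inf_lbound; exists rho.
  split => //; exists A; split => // y [x hx <-].
  rewrite /cylinder /= hAv hrho2.
  have := hX x hx; have := hY x hx; nra.
by rewrite hrho2 mulrA [pi * 2]mulrC.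
Qed.

Theorem mainTheorem3 (R : realType) (n : nat) (K : set 'rV[R]_(2 * n)) (r : R) :
  (0 < n)%N ->
  convex_body K ->
  K = [set - v | v in K] ->
  K = [set mulI v | v in K] ->
  0 < r ->
  eball 0 r `<=` K ->
  (forall s : R, r < s -> ~ (eball 0 s `<=` K)) ->
  (c_lin_Z K <= (2 * pi * r ^+ 2)%:E)%E.
Proof.
move=> hn hcb hsym hI hr hball hmax.
apply/lee_addgt0Pr => d hd.
have hp := pi_gt0 R.
have hc : 0 < 12 * pi * r by rewrite !mulr_gt0.
pose eps := Num.min (r / 2) (d / (12 * pi * r)).
have he : 0 < eps by rewrite lt_min divr_gt0 // divr_gt0.
have he1 : eps <= r / 2 by rewrite ge_min lexx.
have he2 : eps <= d / (12 * pi * r) by rewrite ge_min lexx orbT.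
have he3 : eps * (12 * pi * r) <= d by rewrite -ler_pdivlMr.
apply: (le_trans (bound_eps hn hcb hsym hI hr hball hmax he _)); first lra.
rewrite lee_fin; nra.
Qed.
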